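(* Let $P$ and $Q$ be lattice paths from $(0,0)$ to $(m,r)$ with $P$ never going above $Q$. Then the dimension of the lattice path matroid polytope $\mathcal{P}(M[P,Q])$ is $m+r-k+1$, where $k$ is the number of intersection points (common lattice points) of $P$ and $Q$.
   Context: Lattice paths use steps $E=(1,0)$ and $N=(0,1)$ and are written as words $p_1p_2\cdots p_{m+r}$ in $E,N$. For lattice paths $P,Q$ from $(0,0)$ to $(m,r)$ with $P$ never above $Q$, let $u_1<\dots<u_r$ be the positions of the North steps of $P$ and $l_1<\dots<l_r$ those of $Q$; $M[P,Q]$ is the transversal matroid on ground set $[m+r]$ with presentation $\{[l_i,u_i]: i\in[r]\}$. Equivalently, an $r$-subset $B\subseteq[m+r]$ is a basis iff the lattice path having North steps exactly at the positions in $B$ (East steps elsewhere) stays in the region bounded by $P$ and $Q$. The lattice path matroid polytope is $\mathcal{P}(M[P,Q])=\mathrm{conv}\{e_B : B \text{ a basis}\}\subseteq\mathbb{R}^{m+r}$, where $e_B=\sum_{b\in B}e_b$ and $e_i$ are the standard basis vectors. *)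

(* Defs.v *)
From HB Require Import structures.
From mathcomp Require Import all_boot all_order all_algebra.
Set Implicit Arguments. Unset Strict Implicit. Unset Printing Implicit Defensive.
Import Order.TTheory GRing.Theory Num.Theory.
Local Open Scope ring_scope.

(* A lattice path from (0,0) to (m,r) with steps E,N is a word p_1...p_(m+r);
   we encode it by the set S of positions of its North steps, positions being
   numbered 0,...,m+r-1 (i.e. position i+1 of the paper is i here). *)

Definition height (n : nat) (S : {set 'I_n}) (t : nat) : nat :=
  #|[set i in S | (i < t)%N]|.

Definition is_path (m r : nat) (S : {set 'I_(m + r)}) : Prop := #|S| = r.

Definition path_point (n : nat) (S : {set 'I_n}) (t : nat) : nat * nat :=
  ((t - height S t)%N, height S t).

Definition path_points (n : nat) (S : {set 'I_n}) : seq (nat * nat) :=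
  [seq path_point S t | t <- iota 0 n.+1].

(* P never goes above Q : after any number t of steps, P has made at most as
   many North steps as Q (both being on the antidiagonal x + y = t). *)
Definition never_above (n : nat) (P Q : {set 'I_n}) : Prop :=
  forall t, (t <= n)%N -> (height P t <= height Q t)%N.

Definition num_intersections (n : nat) (P Q : {set 'I_n}) : nat :=
  count (fun p => p \in path_points Q) (path_points P).

(* B is a basis of M[P,Q]: the lattice path with North steps exactly at B
   stays in the region bounded by P and Q. *)
Definition lpm_basis (m r : nat) (P Q B : {set 'I_(m + r)}) : bool :=
  (#|B| == r) && [forall t : 'I_(m + r).+1,
     (height P t <= height B t)%N && (height B t <= height Q t)%N].

Definition indvec (R : nzRingType) (n : nat) (B : {set 'I_n}) : 'rV[R]_n :=
  \row_i (if i \in B then 1 else 0).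

Definition conv (R : realFieldType) (n : nat) (S : seq 'rV[R]_n) (x : 'rV[R]_n)
  : Prop :=
  exists w : 'I_(size S) -> R,
    (forall i, 0 <= w i) /\ \sum_i w i = 1 /\
    x = \sum_i w i *: S`_i.

Definition lpm_polytope (R : realFieldType) (m r : nat) (P Q : {set 'I_(m + r)})
  : 'rV[R]_(m + r) -> Prop :=
  conv [seq indvec R B | B <- enum [set B | lpm_basis P Q B]].

Definition aff_indep (R : fieldType) (n k : nat) (p : 'I_k.+1 -> 'rV[R]_n) : bool :=
  row_free (\matrix_(i < k) (p (lift ord0 i) - p ord0)).

Definition has_dim (R : fieldType) (n : nat) (A : 'rV[R]_n -> Prop) (d : nat) : Prop :=
  (exists p : 'I_d.+1 -> 'rV[R]_n, (forall i, A (p i)) /\ aff_indep p) /\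
  (forall p : 'I_d.+2 -> 'rV[R]_n, (forall i, A (p i)) -> ~~ aff_indep p).

Arguments lpm_polytope R {m r} P Q _.

(* Main.v *)
Require Import Defs.
From HB Require Import structures.
From mathcomp Require Import all_boot all_order all_algebra.
From mathcomp Require Import zify.
Set Implicit Arguments. Unset Strict Implicit. Unset Printing Implicit Defensive.
Import Order.TTheory GRing.Theory Num.Theory.

Lemma heightE n (S : {set 'I_n}) t :
  height S t = \sum_(i < n) ((i \in S) && (i < t)).
Proof.
rewrite /height -sum1_card big_mkcond /=; apply: eq_bigr => i _.
by rewrite inE; case: (_ && _).
Qed.

Lemma sum_at_lt n (b : pred 'I_n) t (h : t < n) :
  \sum_(i < n) (b i && (val i == t)) = b (Ordinal h).
Proof.
rewrite (bigD1 (Ordinal h)) //= eqxx andbT big1 ?addn0 // => i ne.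
have -> : (val i == t) = false; last by rewrite andbF.
apply/negbTE; apply: contra ne => /eqP e; apply/eqP/val_inj => /=; exact e.
Qed.

Lemma sum_at_ge n (b : pred 'I_n) t (h : n <= t) :
  \sum_(i < n) (b i && (val i == t)) = 0.
Proof.
apply: big1 => i _; have : val i != t by rewrite neq_ltn (leq_trans (ltn_ord i) h).
by move/negbTE->; rewrite andbF.
Qed.

Lemma heightS n (S : {set 'I_n}) t :
  height S t.+1 = height S t + \sum_(i < n) ((i \in S) && (val i == t)).
Proof.
rewrite !heightE -big_split; apply: eq_bigr => i _ /=.
by case: (i \in S) => //=; rewrite ltnS; case: (ltngtP (val i) t) => // ->; rewrite eqxx.
Qed.

Lemma height0 n (S : {set 'I_n}) : height S 0 = 0.
Proof. by rewrite heightE big1 // => i _; rewrite ltn0 andbF. Qed.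

Lemma height_inc n (S : {set 'I_n}) t :
  height S t <= height S t.+1 <= (height S t).+1.
Proof.
rewrite heightS; case: (ltnP t n) => h.
  by rewrite (sum_at_lt (fun i => i \in S) h); case: (_ \in _); rewrite ?addn0 ?addn1 leqnn ?leqnSn.
by rewrite (sum_at_ge (fun i => i \in S) h) addn0 leqnn leqnSn.
Qed.

Lemma height_le n (S : {set 'I_n}) t : height S t <= t.
Proof.
elim: t => [|t IH]; first by rewrite height0.
have := height_inc S t; lia.
Qed.

Lemma height_n n (S : {set 'I_n}) : height S n = #|S|.
Proof. by rewrite /height; apply: eq_card => i; rewrite inE ltn_ord andbT. Qed.

Definition incf (f : nat -> nat) := forall t, f t <= f t.+1 <= (f t).+1.

Definition Gf (a b f : nat -> nat) t := maxn (a t) (minn (b t) (f t)).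

Lemma Gf_inc a b f : incf a -> incf b -> incf f -> incf (Gf a b f).
Proof. move=> ha hb hf t; have := ha t; have := hb t; have := hf t; rewrite /Gf; lia. Qed.

Definition Bg n (g : nat -> nat) : {set 'I_n} := [set i : 'I_n | g i.+1 == (g i).+1].

Lemma height_Bg n g : g 0 = 0 -> incf g -> forall t, t <= n -> height (Bg n g) t = g t.
Proof.
move=> g0 hg; elim=> [|t IH] ht; first by rewrite height0.
rewrite heightS IH ?(ltnW ht) //.
rewrite (sum_at_lt (fun i => i \in Bg n g) ht) inE /=.
have := hg t; case: eqP; lia.
Qed.

Definition GPQ n (P Q : {set 'I_n}) f := Gf (height P) (height Q) f.

Lemma Bg_basis m r (P Q : {set 'I_(m + r)}) f :
  is_path P -> is_path Q -> never_above P Q -> incf f ->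
  lpm_basis P Q (Bg (m + r) (GPQ P Q f)).
Proof.
move=> hP hQ hPQ hf.
have hinc : incf (GPQ P Q f) by apply: Gf_inc => // t; apply: height_inc.
have g0 : GPQ P Q f 0 = 0 by rewrite /GPQ /Gf !height0; lia.
apply/andP; split.
  rewrite -(height_n (Bg _ _)) height_Bg // /GPQ /Gf !height_n hP hQ; apply/eqP; lia.
apply/forallP => t; have ht : t <= m + r by rewrite -ltnS.
rewrite height_Bg // /GPQ /Gf; have := hPQ _ ht; move=> h; apply/andP; split; lia.
Qed.

Definition ev (R : nzRingType) n (k : nat) : 'rV[R]_n := \row_(l < n) ((val l == k)%:R)%R.

Lemma swap (R : nzRingType) m r (P Q : {set 'I_(m + r)}) i :
  is_path P -> is_path Q -> never_above P Q -> i.+1 < m + r ->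
  height P i.+1 < height Q i.+1 ->
  exists B1 B2, [/\ lpm_basis P Q B1, lpm_basis P Q B2 &
    (indvec R B2 - indvec R B1 = ev R (m + r) i - ev R (m + r) i.+1)%R].
Proof.
move=> hP hQ hPQ hi hlt.
set c := height P i.+1.
pose f1 t := c + (t - i.+1).
pose f2 t := f1 t + (t == i.+1).
have inc1 : incf f1 by move=> t; rewrite /f1; lia.
have inc2 : incf f2 by move=> t; rewrite /f2 /f1; lia.
exists (Bg (m + r) (GPQ P Q f1)), (Bg (m + r) (GPQ P Q f2)).
split; [apply: Bg_basis => //|apply: Bg_basis => //|].
have ePi := height_inc P i; have ePi1 := height_inc P i.+1.
have eQi := height_inc Q i; have eQi1 := height_inc Q i.+1.
have G1i : GPQ P Q f1 i = c by rewrite /GPQ /Gf /f2 /f1 -/c; lia.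
have G2i : GPQ P Q f2 i = c by rewrite /GPQ /Gf /f2 /f1 -/c; lia.
have G1i1 : GPQ P Q f1 i.+1 = c by rewrite /GPQ /Gf /f2 /f1 -/c; lia.
have G2i1 : GPQ P Q f2 i.+1 = c.+1 by rewrite /GPQ /Gf /f2 /f1 -/c; lia.
have G1i2 : GPQ P Q f1 i.+2 = c.+1 by rewrite /GPQ /Gf /f2 /f1 -/c; lia.
have G2i2 : GPQ P Q f2 i.+2 = c.+1 by rewrite /GPQ /Gf /f2 /f1 -/c; lia.
have Geq t : t != i.+1 -> GPQ P Q f2 t = GPQ P Q f1 t.
  by move=> ne; rewrite /GPQ /Gf /f2 (negbTE ne) addn0.
suff E : forall k : nat,
  ((if GPQ P Q f2 k.+1 == (GPQ P Q f2 k).+1 then 1 else 0) -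
   (if GPQ P Q f1 k.+1 == (GPQ P Q f1 k).+1 then 1 else 0) =
   (k == i)%:R - (k == i.+1)%:R :> R)%R.
  by apply/rowP => l; rewrite !mxE !inE; exact: E.
move=> k.
case: (eqVneq k i) => [->|nei].
  rewrite G1i G2i G1i1 G2i1 !eqxx.
  have -> : (c == c.+1) = false by lia.
  have -> : (i == i.+1) = false by lia.
  by [].
case: (eqVneq k i.+1) => [->|nei1].
  rewrite G1i1 G2i1 G1i2 G2i2 !eqxx.
  have -> : (c.+1 == c.+2) = false by lia.

  by [].
rewrite (Geq _ nei1) Geq; last by apply: contra nei => /eqP [] ->.
by rewrite subrr subrr.
Qed.

Local Open Scope ring_scope.

Definition pref (R : nzRingType) n (v : 'rV[R]_n) (t : nat) : R :=
  (\sum_(j < n) (if (j < t)%N then v 0 j else 0))%R.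

Lemma sum_delta (R : nzRingType) n (F : nat -> R) (l : 'I_n) :
  (\sum_(i < n) F i * ((val l == val i)%:R) = F l)%R.
Proof.
rewrite (bigD1 l) //= eqxx mulr1 big1 ?addr0 // => i ne.
have -> : (val l == val i) = false.
  by apply/negbTE; apply: contra ne => /eqP e; apply/eqP/val_inj.
by rewrite mulr0.
Qed.

Lemma pref0 (R : nzRingType) n (v : 'rV[R]_n) : pref v 0 = 0%R.
Proof. by rewrite /pref big1. Qed.

Lemma pref_diff (R : nzRingType) n (v : 'rV[R]_n) (l : 'I_n) :
  (pref v (val l).+1 - pref v l = v 0 l)%R.
Proof.
rewrite /pref -sumrB -(sum_delta (fun _ => v 0 l) l) /=.
apply: eq_bigr => i _; rewrite ltnS leq_eqVlt.
case: (eqVneq (val i) (val l)) => [e|ne] /=.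
  have -> : i = l by apply: val_inj.
  by rewrite ltnn subr0 mulr1.
by rewrite subrr mulr0.
Qed.

Lemma telescope (R : nzRingType) n (v : 'rV[R]_n) :
  v = \sum_(i < n) pref v i.+1 *: (ev R n i - ev R n i.+1).
Proof.
apply/rowP => l; rewrite summxE.
under eq_bigr => i _ do rewrite !mxE mulrBr.
rewrite sumrB (sum_delta (fun i => pref v i.+1) l).
have -> : \sum_(i < n) pref v i.+1 * (val l == (val i).+1)%:R = pref v l.
  case: l => [[|l'] hl] /=.
    by rewrite pref0 big1 // => i _; rewrite mulr0.
  have hl' : (l' < n)%N by apply: ltnW.
  under eq_bigr => i _ do rewrite eqSS.
  exact: (sum_delta (fun i => pref v i.+1) (Ordinal hl')).
by rewrite pref_diff.
Qed.

Lemma key (R : fieldType) n (T : pred nat) k (M : 'M[R]_(k, n)) (v : 'rV[R]_n) :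
  T n -> (forall t, (t <= n)%N -> T t -> pref v t = 0) ->
  (forall i, (i.+1 < n)%N -> ~~ T i.+1 -> (ev R n i - ev R n i.+1 <= M)%MS) ->
  (v <= M)%MS.
Proof.
move=> Tn hp hM; rewrite (telescope v); apply/summx_sub => i _.
case: (boolP ((i.+1 < n)%N && ~~ T i.+1)) => [/andP[h1 h2]|H].
  by apply/scalemx_sub/hM.
have -> : pref v i.+1 = 0.
  apply: hp; first exact: ltn_ord i.
  move: H; rewrite negb_and negbK; case/orP => // h.
  have -> : i.+1 = n by have := ltn_ord i; lia.
  exact: Tn.
by rewrite scale0r sub0mx.
Qed.

Local Open Scope ring_scope.

Definition Tp n (P Q : {set 'I_n}) : pred nat := fun t => height P t == height Q t.
Definition Tl n (P Q : {set 'I_n}) := [seq t <- iota 1 n | Tp P Q t].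
Definition Cmx (R : nzRingType) n (P Q : {set 'I_n}) : 'M[R]_(n, size (Tl P Q)) :=
  \matrix_(l, j) ((val l < nth 0%N (Tl P Q) j)%N)%:R.
Definition Fl n (P Q : {set 'I_n}) := [seq i <- iota 0 n | (i.+1 < n)%N && ~~ Tp P Q i.+1].
Definition Fmx (R : nzRingType) n (P Q : {set 'I_n}) : 'M[R]_(size (Fl P Q), n) :=
  \matrix_(j < size (Fl P Q)) (ev R n (nth 0%N (Fl P Q) j) - ev R n (nth 0%N (Fl P Q) j).+1).

Lemma mulC (R : nzRingType) n (P Q : {set 'I_n}) (v : 'rV[R]_n) j :
  (v *m Cmx R P Q) 0 j = pref v (nth 0%N (Tl P Q) j).
Proof.
rewrite mxE /pref; apply: eq_bigr => l _; rewrite mxE.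
by case: ifP => _; rewrite ?mulr1 ?mulr0.
Qed.

Lemma Tl_mem n (P Q : {set 'I_n}) t : (0 < t <= n)%N -> Tp P Q t -> t \in Tl P Q.
Proof. by move=> /andP[h1 h2] h; rewrite mem_filter h mem_iota h1 add1n ltnS h2. Qed.

Lemma Tl_prop n (P Q : {set 'I_n}) t : t \in Tl P Q -> (t <= n)%N /\ Tp P Q t.
Proof. by rewrite mem_filter mem_iota add1n ltnS => /andP[h /andP[_ ->]]. Qed.

Lemma prefC (R : nzRingType) n (P Q : {set 'I_n}) (v : 'rV[R]_n) :
  v *m Cmx R P Q = 0 -> forall t, (t <= n)%N -> Tp P Q t -> pref v t = 0.
Proof.
move=> h [|t] ht hT; first exact: pref0.
have hm := Tl_mem (t := t.+1) (P := P) (Q := Q) ht hT.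
have hj : (index t.+1 (Tl P Q) < size (Tl P Q))%N by rewrite index_mem.
by rewrite -(nth_index 0%N hm) -(mulC v (Ordinal hj)) h mxE.
Qed.

Lemma Tn m r (P Q : {set 'I_(m + r)}) : is_path P -> is_path Q -> Tp P Q (m + r).
Proof. by rewrite /Tp /is_path !height_n => -> ->. Qed.

Lemma FinF (R : fieldType) n (P Q : {set 'I_n}) i :
  (i.+1 < n)%N -> ~~ Tp P Q i.+1 -> (ev R n i - ev R n i.+1 <= Fmx R P Q)%MS.
Proof.
move=> h1 h2.
have hm : i \in Fl P Q by rewrite mem_filter h1 h2 mem_iota add0n (ltnW h1).
have hj : (index i (Fl P Q) < size (Fl P Q))%N by rewrite index_mem.
have := row_sub (Ordinal hj) (Fmx R P Q).
by rewrite /Fmx rowK /= nth_index.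
Qed.

Lemma keyF (R : fieldType) m r (P Q : {set 'I_(m + r)}) (v : 'rV[R]_(m + r)) :
  is_path P -> is_path Q -> v *m Cmx R P Q = 0 -> (v <= Fmx R P Q)%MS.
Proof.
move=> hP hQ h; apply: (key (T := Tp P Q)).
- exact: Tn.
- exact: prefC.
- by move=> i h1 h2; exact: FinF.
Qed.

Lemma size_FT n (P Q : {set 'I_n}) : (size (Fl P Q) + size (Tl P Q) <= n)%N.
Proof.
rewrite !size_filter -[1%N]/(1 + 0)%N iotaDl count_map -count_predUI.
rewrite (@eq_count _ (predI _ _) pred0); last first.
  by move=> i /=; rewrite add1n; case: (Tp P Q i.+1); rewrite ?andbF.
rewrite count_pred0 addn0; apply: leq_trans (count_size _ _) _.
by rewrite size_iota.
Qed.

Lemma rankF (R : fieldType) n (P Q : {set 'I_n}) :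
  (\rank (Fmx R P Q) <= n - size (Tl P Q))%N.
Proof. apply: leq_trans (rank_leq_row _) _; have := size_FT P Q; lia. Qed.

Definition Lst (R : nzRingType) m r (P Q : {set 'I_(m + r)}) :=
  [seq indvec R B | B <- enum [set B | lpm_basis P Q B]].

Lemma Lst_basis (R : nzRingType) m r (P Q : {set 'I_(m + r)}) k :
  (k < size (Lst R P Q))%N -> exists B, lpm_basis P Q B /\ (Lst R P Q)`_k = indvec R B.
Proof.
move=> hk; rewrite size_map in hk.
exists (nth set0 (enum [set B | lpm_basis P Q B]) k); split.
  by have := mem_nth set0 hk; rewrite mem_enum inE.
by rewrite /Lst (nth_map set0).
Qed.

Lemma basis_idx (R : nzRingType) m r (P Q : {set 'I_(m + r)}) B :
  lpm_basis P Q B -> exists k : 'I_(size (Lst R P Q)), (Lst R P Q)`_k = indvec R B.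
Proof.
move=> hB; have hm : B \in enum [set B | lpm_basis P Q B] by rewrite mem_enum inE.
have hj : (index B (enum [set B | lpm_basis P Q B]) < size (Lst R P Q))%N.
  by rewrite size_map index_mem.
exists (Ordinal hj) => /=.
by rewrite /Lst (nth_map set0) ?index_mem // nth_index.
Qed.

Lemma conv_pt (R : realFieldType) m r (P Q : {set 'I_(m + r)}) (k : 'I_(size (Lst R P Q))) :
  lpm_polytope R P Q ((Lst R P Q)`_k).
Proof.
exists (fun i => (i == k)%:R); split; first by move=> i; exact: ler0n.
split.
  by rewrite (bigD1 k) //= eqxx big1 ?addr0 // => i /negbTE ->.
by rewrite (bigD1 k) //= eqxx scale1r big1 ?addr0 // => i /negbTE ->; rewrite scale0r.
Qed.

Definition c0 (R : nzRingType) n (P Q : {set 'I_n}) : 'rV[R]_(size (Tl P Q)) :=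
  \row_j (height P (nth 0%N (Tl P Q) j))%:R.

Lemma indvecC (R : nzRingType) m r (P Q : {set 'I_(m + r)}) B :
  lpm_basis P Q B -> indvec R B *m Cmx R P Q = c0 R P Q.
Proof.
move=> hB; apply/rowP => j; rewrite mulC mxE.
set t := nth 0%N (Tl P Q) j.
have [ht hT] := Tl_prop (mem_nth 0%N (ltn_ord j)); rewrite -/t in ht hT.
have -> : pref (indvec R B) t = (height B t)%:R.
  rewrite /pref heightE natr_sum; apply: eq_bigr => l _; rewrite mxE.
  by case: (l \in B); case: (l < t)%N.
congr (_%:R).
have ht' : (t < (m + r).+1)%N by [].
move: hB => /andP[_ /forallP /(_ (Ordinal ht'))] /andP[h1 h2].
move: hT; rewrite /Tp => /eqP e; simpl in h1, h2; lia.
Qed.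

Lemma polyC (R : realFieldType) m r (P Q : {set 'I_(m + r)}) x :
  lpm_polytope R P Q x -> x *m Cmx R P Q = c0 R P Q.
Proof.
case=> w [w0 [w1 ->]]; rewrite mulmx_suml.
rewrite (eq_bigr (fun i => w i *: c0 R P Q)); last first.
  move=> i _; rewrite -scalemxAl.
  have := Lst_basis (R := R) (P := P) (Q := Q) (ltn_ord i).
  by rewrite /Lst => -[B [hB ->]]; rewrite indvecC.
by rewrite -scaler_suml w1 scale1r.
Qed.

Lemma diffF (R : realFieldType) m r (P Q : {set 'I_(m + r)}) x y :
  is_path P -> is_path Q ->
  lpm_polytope R P Q x -> lpm_polytope R P Q y -> (x - y <= Fmx R P Q)%MS.
Proof.
move=> hP hQ hx hy; apply: keyF => //.
by rewrite mulmxBl (polyC hx) (polyC hy) subrr.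
Qed.

Local Close Scope ring_scope.

Lemma numI n (P Q : {set 'I_n}) : num_intersections P Q = (size (Tl P Q)).+1.
Proof.
rewrite /num_intersections /path_points count_map.
rewrite (@eq_in_count _ _ (Tp P Q)); last first.
  move=> t ht; change ((path_point P t \in [seq path_point Q t | t <- iota 0 n.+1]) = Tp P Q t); apply/mapP/idP.
    move=> [t' _ e]; move: e; rewrite /path_point => -[e1 e2].
    have := height_le P t; have := height_le Q t'; move=> h1 h2.
    have et : t = t' by lia.
    by subst t'; rewrite /Tp e2.
  by move=> hT; exists t => //; rewrite /path_point (eqP hT).
by rewrite size_filter /= /Tp !height0 eqxx.
Qed.

Local Close Scope ring_scope.
Unset Implicit Arguments.

Theorem corollary3p4 (R : realFieldType) (m r : nat) (P Q : {set 'I_(m + r)}) :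
  is_path P -> is_path Q -> never_above P Q ->
  has_dim (lpm_polytope R P Q) (m + r + 1 - num_intersections P Q).
Proof.
move=> hP hQ hPQ.
rewrite numI.
have -> : (m + r + 1 - (size (Tl P Q)).+1 = m + r - size (Tl P Q))%N by lia.
split.
  pose A := (\matrix_(k < size (Lst R P Q)) ((Lst R P Q)`_k - indvec R P))%R.
  have hPb : lpm_basis P Q P.
    apply/andP; split; first by apply/eqP; exact: hP.
    apply/forallP => t; rewrite leqnn /=; apply: hPQ; rewrite -ltnS; exact: ltn_ord.
  have [k0 hk0] := basis_idx R hPb.
  have hAF : (A <= Fmx R P Q)%MS.
    apply/row_subP => k; rewrite rowK; apply: diffF => //; first exact: conv_pt.
    by rewrite -hk0; exact: conv_pt.
  have hKA : (kermx (Cmx R P Q) <= A)%MS.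
    apply/row_subP => i; apply: (key (T := Tp P Q)).
    - exact: Tn.
    - by apply: prefC; rewrite -row_mul mulmx_ker row0.
    move=> i' h1 h2.
    have h3 : (height P i'.+1 < height Q i'.+1)%N.
      have := hPQ i'.+1 (ltnW h1); move: h2; rewrite /Tp; lia.
    have [B1 [B2 [hB1 hB2 e]]] := swap R hP hQ hPQ h1 h3.
    rewrite -e.
    have [k1 e1] := basis_idx R hB1; have [k2 e2] := basis_idx R hB2.
    have -> : (indvec R B2 - indvec R B1 = row k2 A - row k1 A)%R.
      by rewrite !rowK -e1 -e2 opprB addrA subrK.
    apply: addmx_sub; first exact: row_sub.
    by rewrite -scaleN1r; apply: scalemx_sub; exact: row_sub.
  have hrank : \rank A = (m + r - size (Tl P Q))%N.
    apply/eqP; rewrite eqn_leq; apply/andP; split.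
      exact: leq_trans (mxrankS hAF) (rankF _ _ _).
    have := mxrankS hKA; rewrite mxrank_ker; have := rank_leq_col (Cmx R P Q); lia.
  pose f := maxrankfun A.
  pose pts (j : 'I_(m + r - size (Tl P Q)).+1) : 'rV[R]_(m + r) :=
    if unlift ord0 j is Some i then ((Lst R P Q)`_(f (cast_ord (esym hrank) i)))%R
    else indvec R P.
  exists pts; split.
    move=> j; rewrite /pts; case: unlift => [i|]; first exact: conv_pt.
    by rewrite -hk0; exact: conv_pt.
  rewrite /aff_indep -row_leq_rank.
  set M' := (\matrix_(i < _) _)%R.
  have hsub : (rowsub f A <= M')%MS.
    apply/row_subP => i.
    have -> : row i (rowsub f A) = row (cast_ord hrank i) M'.
      rewrite row_rowsub /M' !rowK /pts liftK unlift_none cast_ordK.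
      by [].
    exact: row_sub.
  have := mxrankS hsub; rewrite (eqP (maxrowsub_free A)) hrank //.
move=> p hp; rewrite /aff_indep -row_leq_rank -ltnNge ltnS.
set D := (\matrix_(i < _) _)%R.
have hD : (D <= Fmx R P Q)%MS.
  by apply/row_subP => i; rewrite rowK; apply: diffF.
exact: leq_trans (mxrankS hD) (rankF _ _ _).
Qed.
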